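(* Let $p$ be prime, let $c_1,\dots,c_k$ be positive integers, and let $v\ge2$ be an integer coprime to $p$. Given any interval $\tilde J\subset[0,1]$ and any $\varepsilon>0$, there exists a $v$-adic interval $I\subset\tilde J$ such that for every $i\in\{1,\dots,k\}$, letting $J^i$ be the smallest $pc_i$-adic interval containing $I$, there is a point $\zeta(J^i)$ which is an interior endpoint of one of the $pc_i$-adic children of $J^i$ (i.e. an endpoint of a child lying in the interior of $J^i$) satisfying $$0<\zeta(J^i)-Z(I)\le\varepsilon|I|.$$
   Context: For a positive integer $N$, the $N$-adic intervals are $[\frac{k-1}{N^s},\frac{k}{N^s})$, $s,k\in\mathbb{Z}$, with $N$-adic children the $N$ equal-length subintervals $[\frac{k-1}{N^s}+\frac{j-1}{N^{s+1}},\frac{k-1}{N^s}+\frac{j}{N^{s+1}})$, $1\le j\le N$. For a $v$-adic interval $I=[\frac{k-1}{v^s},\frac{k}{v^s})$, $Z(I)=\frac{k-1}{v^s}+\frac{v-1}{v^{s+1}}$ is the left endpoint of its last $v$-adic child. $|I|$ is the length of $I$. *)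

(* Defs.v *)
From Stdlib Require Import Reals ZArith Znumtheory Lra Lia.
Open Scope R_scope.

Definition adic_left (N s k : Z) : R := IZR (k - 1) / powerRZ (IZR N) s.
Definition adic_right (N s k : Z) : R := IZR k / powerRZ (IZR N) s.

Definition in_adic (N s k : Z) (x : R) : Prop :=
  adic_left N s k <= x < adic_right N s k.

Definition adic_subset (N s k s' k' : Z) : Prop :=
  forall x, in_adic N s k x -> in_adic N s' k' x.

Definition smallest_adic_containing (N s' k' v s k : Z) : Prop :=
  (forall x, in_adic v s k x -> in_adic N s' k' x) /\
  (forall s'' k'', (forall x, in_adic v s k x -> in_adic N s'' k'' x) ->
     adic_subset N s' k' s'' k'').

Definition child_left (N s k j : Z) : R :=
  adic_left N s k + IZR (j - 1) / powerRZ (IZR N) (s + 1).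
Definition child_right (N s k j : Z) : R :=
  adic_left N s k + IZR j / powerRZ (IZR N) (s + 1).

Definition interior_child_endpoint (N s k : Z) (zeta : R) : Prop :=
  (exists j : Z, (1 <= j <= N)%Z /\
     (zeta = child_left N s k j \/ zeta = child_right N s k j)) /\
  adic_left N s k < zeta < adic_right N s k.

(* Z(I) for the v-adic interval I = (s,k): left endpoint of its last child. *)
Definition Zpt (v s k : Z) : R :=
  adic_left v s k + IZR (v - 1) / powerRZ (IZR v) (s + 1).

Definition adic_len (v s k : Z) : R := adic_right v s k - adic_left v s k.

Definition is_interval_in_01 (J : R -> Prop) : Prop :=
  (forall x, J x -> 0 <= x <= 1) /\
  (forall x y z, J x -> J z -> x <= y <= z -> J y) /\
  (exists x y, J x /\ J y /\ x < y).

(* Main.v *)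
Require Import Defs.
From Stdlib Require Import Reals ZArith Znumtheory Lra Lia Classical.
From mathcomp Require ssreflect ssrfun ssrbool eqtype ssrnat div prime fingroup cyclic.
Module MC.
Import ssreflect ssrfun ssrbool eqtype ssrnat div prime fingroup cyclic.
Local Open Scope nat_scope.
Lemma expn_pow a n : expn a n = Nat.pow a n.
Proof. elim: n => [|n IH] //=. by rewrite expnS IH. Qed.
Lemma period_nat (a q : nat) : 0 < a -> 0 < q -> coprime a q ->
  exists P d, 0 < P /\ Nat.pow a P = Nat.add (Nat.mul d q) 1.
Proof.
move=> apos q0 co. exists (totient q).
have H := Euler_exp_totient co.
have a0 : 0 < a ^ totient q by rewrite expn_gt0 apos.
have : q %| a ^ totient q - 1.
  by rewrite -eqn_mod_dvd // H.
case/dvdnP => d Hd. exists d. split; first by rewrite totient_gt0.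
rewrite -expn_pow. transitivity (d * q + 1); last by []. by rewrite -Hd subnK.
Qed.
Lemma coprime_of (a q : nat) : (forall g, Nat.divide g a -> Nat.divide g q -> g = 1) -> coprime a q.
Proof.
move=> H. apply/eqP. apply: H.
- case/dvdnP: (dvdn_gcdl a q) => k Hk. by exists k; exact: Hk.
- case/dvdnP: (dvdn_gcdr a q) => k Hk. by exists k; exact: Hk.
Qed.
Lemma coprimeX (a q t : nat) : coprime a q -> coprime a (Nat.pow q t).
Proof. move=> H. rewrite -expn_pow. case: t => [|t]; first by rewrite coprimen1. by rewrite coprimeXr. Qed.
Lemma leq_of (m n : nat) : Peano.le m n -> is_true (m <= n). Proof. by move/leP. Qed.
Lemma of_leq (m n : nat) : is_true (m <= n) -> Peano.le m n. Proof. by move/leP. Qed.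
End MC.
Open Scope Z_scope.
Lemma period_Z (v p : Z) (t : nat) : 2 <= v -> 2 <= p -> rel_prime v p ->
  exists P : nat, (0 < P)%nat /\ exists d : Z, v ^ Z.of_nat P = d * p ^ Z.of_nat t + 1.
Proof.
  intros hv hp hvp.
  assert (co : is_true (div.coprime (Z.to_nat v) (Nat.pow (Z.to_nat p) t))).
  { apply MC.coprimeX. apply MC.coprime_of. intros g [x Hx] [y Hy].
    assert (H1 : (Z.of_nat g | 1)).
    { destruct hvp as [_ _ H]. apply H.
      - exists (Z.of_nat x). rewrite <- (Z2Nat.id v) by lia. rewrite Hx. lia.
      - exists (Z.of_nat y). rewrite <- (Z2Nat.id p) by lia. rewrite Hy. lia. }
    apply Z.divide_1_r in H1. lia. }
  destruct (MC.period_nat (Z.to_nat v) (Nat.pow (Z.to_nat p) t)) as [P [d [HP Hd]]].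
  - apply MC.leq_of. lia.
  - apply MC.leq_of. assert (Nat.pow (Z.to_nat p) t <> 0)%nat by (apply Nat.pow_nonzero; lia). lia.
  - exact co.
  - exists P. split. { apply MC.of_leq in HP. lia. }
    exists (Z.of_nat d). apply (f_equal Z.of_nat) in Hd.
    rewrite Nat2Z.inj_pow, Nat2Z.inj_add, Nat2Z.inj_mul, Nat2Z.inj_pow in Hd.
    rewrite !Z2Nat.id in Hd by lia. exact Hd.
Qed.
Open Scope R_scope.

Lemma div_lt_iff a b c : 0 < c -> (a / c < b <-> a < b * c).
Proof. intros Hc; split; intro H.
- replace a with (a / c * c) by (field; lra). apply Rmult_lt_compat_r; lra.
- apply (Rmult_lt_reg_r c); auto. replace (a / c * c) with a by (field; lra). lra. Qed.
Lemma lt_div_iff a b c : 0 < c -> (b < a / c <-> b * c < a).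
Proof. intros Hc; split; intro H.
- replace a with (a / c * c) by (field; lra). apply Rmult_lt_compat_r; lra.
- apply (Rmult_lt_reg_r c); auto. replace (a / c * c) with a by (field; lra). lra. Qed.
Lemma div_le_iff a b c : 0 < c -> (a / c <= b <-> a <= b * c).
Proof. intros Hc; split; intro H.
- replace a with (a / c * c) by (field; lra). apply Rmult_le_compat_r; lra.
- apply (Rmult_le_reg_r c); auto. replace (a / c * c) with a by (field; lra). lra. Qed.
Lemma le_div_iff a b c : 0 < c -> (b <= a / c <-> b * c <= a).
Proof. intros Hc; split; intro H.
- replace a with (a / c * c) by (field; lra). apply Rmult_le_compat_r; lra.
- apply (Rmult_le_reg_r c); auto. replace (a / c * c) with a by (field; lra). lra. Qed.

Lemma int_lt (z w : Z) : IZR z < IZR w -> (z < w)%Z.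
Proof. apply lt_IZR. Qed.

Lemma powerRZ_nonneg_IZR (N e : Z) : (0 <= e)%Z -> powerRZ (IZR N) e = IZR (N ^ e).
Proof. intros He. rewrite <- (Z2Nat.id e) at 1 by lia. rewrite <- pow_powerRZ, pow_IZR.
  rewrite Z2Nat.id by lia. reflexivity. Qed.

Lemma powerRZ_split (N : Z) (a e : Z) : (2 <= N)%Z -> (0 <= e)%Z ->
  powerRZ (IZR N) (a + e) = powerRZ (IZR N) a * IZR (N ^ e).
Proof. intros HN He. rewrite powerRZ_add. 2: { apply not_0_IZR; lia. }
  rewrite (powerRZ_nonneg_IZR N e); auto. Qed.

Lemma key_i (N : Z) (hN : (2 <= N)%Z) (n : nat) (zeta : R) (z1 : Z)
  (h1 : zeta * IZR N ^ S n = IZR z1) (h0 : forall z, zeta * IZR N ^ n <> IZR z)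
  (v s k : Z) (l : R) (hl : in_adic v s k l) (hlz : l < zeta) (hz : in_adic v s k zeta)
  (hI : forall x, in_adic v s k x -> in_adic N (Z.of_nat n) (up (zeta * IZR N ^ n)) x) :
  smallest_adic_containing N (Z.of_nat n) (up (zeta * IZR N ^ n)) v s k /\
  interior_child_endpoint N (Z.of_nat n) (up (zeta * IZR N ^ n)) zeta.
Proof.
  set (y := zeta * IZR N ^ n) in *.
  set (k' := up y) in *.
  assert (HNR : 2 <= IZR N) by (apply IZR_le; lia).
  assert (Hpn : 0 < IZR N ^ n) by (apply pow_lt; lra).
  destruct (archimed y) as [Hy1 Hy2]. fold k' in Hy1, Hy2.
  assert (Hy3 : IZR (k' - 1) < y).
  { rewrite minus_IZR. assert (Hq : IZR k' - 1 <= y) by lra.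
    destruct (Rle_lt_or_eq_dec _ _ Hq) as [H|H]; auto.
    exfalso. apply (h0 (k' - 1)%Z). fold y. rewrite minus_IZR. lra. }
  assert (Eleft : adic_left N (Z.of_nat n) k' = IZR (k' - 1) / IZR N ^ n).
  { unfold adic_left. rewrite pow_powerRZ. reflexivity. }
  assert (Eright : adic_right N (Z.of_nat n) k' = IZR k' / IZR N ^ n).
  { unfold adic_right. rewrite pow_powerRZ. reflexivity. }
  split.
  - split; [exact hI|].
    intros s'' k'' H'' x Hx.
    destruct (H'' l hl) as [Hl1 _].
    destruct (H'' zeta hz) as [_ Hz2].
    unfold adic_subset, in_adic in *. rewrite Eleft, Eright in Hx.
    unfold adic_left, adic_right in *.
    assert (Hps : 0 < powerRZ (IZR N) s'') by (apply powerRZ_lt; lra).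
    destruct (Z_le_gt_dec s'' (Z.of_nat n)) as [Hc|Hc].
    + set (e := (Z.of_nat n - s'')%Z).
      assert (He : IZR N ^ n = powerRZ (IZR N) s'' * IZR (N ^ e)).
      { rewrite pow_powerRZ. rewrite <- powerRZ_split by (unfold e; lia). f_equal. unfold e; lia. }
      assert (HA : IZR ((k'' - 1) * N ^ e) < y).
      { rewrite mult_IZR. unfold y. rewrite He.
        apply div_le_iff in Hl1; auto.
        assert (0 < IZR (N ^ e)) by (apply IZR_lt; apply Z.pow_pos_nonneg; unfold e; lia).
        nra. }
      assert (HB : y < IZR (k'' * N ^ e)).
      { rewrite mult_IZR. unfold y. rewrite He.
        apply lt_div_iff in Hz2; auto.
        assert (0 < IZR (N ^ e)) by (apply IZR_lt; apply Z.pow_pos_nonneg; unfold e; lia).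
        nra. }
      assert (HA' : ((k'' - 1) * N ^ e <= k' - 1)%Z).
      { assert (Ht := int_lt _ _ (Rlt_trans _ _ _ HA Hy1)). lia. }
      assert (HB' : (k' <= k'' * N ^ e)%Z).
      { assert (Ht := int_lt _ _ (Rlt_trans _ _ _ Hy3 HB)). lia. }
      apply IZR_le in HA'. apply IZR_le in HB'. rewrite mult_IZR in HA', HB'.
      destruct Hx as [Hx1 Hx2].
      apply div_le_iff in Hx1; auto. apply lt_div_iff in Hx2; auto.
      rewrite He in Hx1, Hx2.
      assert (0 < IZR (N ^ e)) by (apply IZR_lt; apply Z.pow_pos_nonneg; unfold e; lia).
      split.
      * apply div_le_iff; auto. apply (Rmult_le_reg_r (IZR (N ^ e))); auto. nra.
      * apply lt_div_iff; auto. apply (Rmult_lt_reg_r (IZR (N ^ e))); auto. nra.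
    + exfalso.
      set (e := (s'' - Z.of_nat (S n))%Z).
      assert (He : powerRZ (IZR N) s'' = IZR N ^ S n * IZR (N ^ e)).
      { rewrite pow_powerRZ. rewrite <- powerRZ_split by (unfold e; lia). f_equal. unfold e; lia. }
      assert (HZ : zeta * powerRZ (IZR N) s'' = IZR (z1 * N ^ e)).
      { rewrite mult_IZR, He, <- h1. ring. }
      apply div_le_iff in Hl1; auto. apply lt_div_iff in Hz2; auto.
      assert (Hm : l * powerRZ (IZR N) s'' < zeta * powerRZ (IZR N) s'') by (apply Rmult_lt_compat_r; lra).
      assert (H1 : IZR (k'' - 1) < IZR (z1 * N ^ e)) by lra.
      assert (H2 : IZR (z1 * N ^ e) < IZR k'') by lra.
      apply int_lt in H1. apply int_lt in H2. lia.
  - assert (Hz1a : IZR ((k' - 1) * N) < IZR z1).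
    { rewrite <- h1, mult_IZR. simpl. unfold y in Hy3. nra. }
    assert (Hz1b : IZR z1 < IZR (k' * N)).
    { rewrite <- h1, mult_IZR. simpl. unfold y in Hy1. nra. }
    apply int_lt in Hz1a. apply int_lt in Hz1b.
    split.
    + exists (z1 - (k' - 1) * N)%Z. split; [lia|]. right.
      unfold child_right. rewrite Eleft.
      replace (Z.of_nat n + 1)%Z with (Z.of_nat (S n)) by lia. rewrite <- pow_powerRZ.
      repeat rewrite ?minus_IZR, ?mult_IZR.
      assert (zeta = IZR z1 / IZR N ^ S n).
      { rewrite <- h1. field. apply pow_nonzero. lra. }
      rewrite H. simpl. field. split; lra.
    + rewrite Eleft, Eright. split.
      * apply div_lt_iff; auto.
      * apply lt_div_iff; auto.
Qed.

Lemma transition (P : nat -> Prop) t : ~ P 0%nat -> P t -> exists n, (n < t)%nat /\ ~ P n /\ P (S n).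
Proof.
  induction t as [|t IH]; intros H0 Ht; [contradiction|].
  destruct (classic (P t)) as [H|H].
  - destruct (IH H0 H) as [n [? ?]]. exists n. split; [lia|auto].
  - exists t. auto.
Qed.

Lemma bound_M (kk : nat) (c : nat -> Z) : exists M, (1 <= M)%Z /\ forall i, (1 <= i <= kk)%nat -> (c i <= M)%Z.
Proof.
  induction kk as [|kk [M [HM H]]].
  - exists 1%Z. split; [lia|]. intros; lia.
  - exists (Z.max M (c (S kk))). split; [lia|]. intros i Hi.
    destruct (Nat.eq_dec i (S kk)) as [->|Hne]; [lia|].
    specialize (H i ltac:(lia)). lia.
Qed.

Lemma pow_large (v : R) (B : R) : 2 <= v -> exists K : nat, B <= v ^ K.
Proof.
  intros Hv. destruct (Pow_x_infinity v ltac:(rewrite Rabs_right; lra) B) as [K HK].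
  exists K. specialize (HK K (le_n K)). rewrite Rabs_right in HK; [lra|].
  apply Rle_ge, pow_le; lra.
Qed.

Lemma period_iter (v q d : Z) (P : nat) : (v ^ Z.of_nat P = d * q + 1)%Z ->
  forall K : nat, exists e, (v ^ Z.of_nat (P * K) = e * q + 1)%Z.
Proof.
  intros H K. induction K as [|K [e He]].
  - exists 0%Z. rewrite Nat.mul_0_r. simpl. lia.
  - exists (e * d * q + e + d)%Z. replace (P * S K)%nat with (P * K + P)%nat by lia.
    rewrite Nat2Z.inj_add, Z.pow_add_r by lia. rewrite He, H. ring.
Qed.
Theorem proposition2p6
  (p : Z) (hp : prime p)
  (kk : nat) (c : nat -> Z) (hc : forall i, (1 <= i <= kk)%nat -> (0 < c i)%Z)
  (v : Z) (hv : (2 <= v)%Z) (hvp : rel_prime v p)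
  (J : R -> Prop) (hJ : is_interval_in_01 J)
  (eps : R) (heps : 0 < eps) :
  exists s k : Z,
    (forall x, in_adic v s k x -> J x) /\
    forall i, (1 <= i <= kk)%nat ->
      exists s' k' : Z,
        smallest_adic_containing (p * c i) s' k' v s k /\
        exists zeta : R,
          interior_child_endpoint (p * c i) s' k' zeta /\
          0 < zeta - Zpt v s k <= eps * adic_len v s k.
Proof.
  destruct hJ as [H01 [Hconv [x0 [y0 [Jx [Jy Hxy]]]]]].
  assert (Hp2 : (2 <= p)%Z) by (apply prime_ge_2; auto).
  set (vR := IZR v). set (pR := IZR p).
  assert (HvR : 2 <= vR) by (apply IZR_le; lia).
  assert (HpR : 2 <= pR) by (apply IZR_le; lia).
  set (eps' := Rmin eps (1 / (2 * vR))).
  assert (He1 : 0 < eps') by (unfold eps'; apply Rmin_pos; [lra| apply Rdiv_lt_0_compat; lra]).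
  assert (He2 : eps' <= eps) by apply Rmin_l.
  assert (He3 : eps' <= 1 / (2 * vR)) by apply Rmin_r.
  assert (He4 : eps' * vR <= 1/2).
  { apply (Rmult_le_compat_r vR) in He3; [|lra].
    replace (1 / (2 * vR) * vR) with (1/2) in He3 by (field; lra). lra. }
  destruct (pow_large vR (4 / (y0 - x0)) HvR) as [j Hj].
  set (Vj := vR ^ j) in *.
  assert (HVj : 0 < Vj) by (apply pow_lt; lra).
  assert (Hj' : 3 / Vj < y0 - x0).
  { apply div_lt_iff; auto. apply div_le_iff in Hj; [|lra]. nra. }
  set (K0 := up (x0 * Vj)).
  destruct (archimed (x0 * Vj)) as [HK1 HK2]. fold K0 in HK1, HK2.
  set (a0 := (vR - 1) / vR).
  assert (Ha0 : 0 < a0 /\ a0 + eps' < 1).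
  { unfold a0. split; [apply Rdiv_lt_0_compat; lra|].
    apply (Rmult_lt_reg_r vR); [lra|]. rewrite Rmult_plus_distr_r. replace ((vR - 1) / vR * vR) with (vR - 1) by (field; lra).
    lra. }
  set (lo := (IZR K0 + a0 + eps' / 3) / Vj).
  set (hi := (IZR K0 + a0 + 2 * eps' / 3) / Vj).
  assert (Hhl : 0 < hi - lo).
  { unfold hi, lo. replace ((IZR K0 + a0 + 2 * eps' / 3) / Vj - (IZR K0 + a0 + eps' / 3) / Vj)
      with ((eps' / 3) / Vj) by (field; lra). apply Rdiv_lt_0_compat; lra. }
  destruct (pow_large pR (2 / (hi - lo)) HpR) as [t Ht].
  set (Pt := pR ^ t) in *.
  assert (HPt : 0 < Pt) by (apply pow_lt; lra).
  assert (Ht' : 2 / Pt <= hi - lo).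
  { apply div_le_iff; auto. apply div_le_iff in Ht; [|lra]. nra. }
  set (m := up (lo * Pt)).
  destruct (archimed (lo * Pt)) as [Hm1 Hm2]. fold m in Hm1, Hm2.
  set (zeta := IZR m / Pt).
  assert (Hz1 : lo < zeta) by (unfold zeta; apply lt_div_iff; auto).
  assert (Hz2 : zeta + 1 / Pt <= hi).
  { unfold zeta. replace (IZR m / Pt + 1 / Pt) with ((IZR m + 1) / Pt) by (field; lra).
    apply div_le_iff; auto. apply div_le_iff in Ht'; auto. nra. }
  assert (HPt1 : 0 < 1 / Pt) by (apply Rdiv_lt_0_compat; lra).
  set (f := zeta * Vj - IZR K0).
  assert (Hf : a0 < f /\ f <= a0 + eps').
  { unfold f. split.
    - assert (Hq : lo * Vj < zeta * Vj) by (apply Rmult_lt_compat_r; lra). unfold lo in Hq.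
      replace ((IZR K0 + a0 + eps' / 3) / Vj * Vj) with (IZR K0 + a0 + eps' / 3) in Hq by (field; lra). lra.
    - assert (Hq : zeta * Vj < hi * Vj) by (apply Rmult_lt_compat_r; lra). unfold hi in Hq.
      replace ((IZR K0 + a0 + 2 * eps' / 3) / Vj * Vj) with (IZR K0 + a0 + 2 * eps' / 3) in Hq by (field; lra). lra. }
  assert (Hzx : x0 < zeta).
  { apply Rlt_trans with lo; auto. unfold lo. apply lt_div_iff; auto. lra. }
  assert (Hzy : zeta < y0 - 1 / Vj).
  { assert (Hzh : zeta < hi) by lra. apply Rlt_le_trans with hi; auto. unfold hi.
    apply div_le_iff; auto.
    assert (Hq : 3 < (y0 - x0) * Vj) by (apply div_lt_iff in Hj'; auto).
    replace ((y0 - 1 / Vj) * Vj) with (y0 * Vj - 1) by (field; lra). nra. }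
  assert (H1Vj : 0 < 1 / Vj) by (apply Rdiv_lt_0_compat; lra).
  assert (Hx01 := H01 x0 Jx). assert (Hy01 := H01 y0 Jy).
  assert (Hz01 : 0 < zeta < 1) by lra.
  destruct (period_Z v p t hv Hp2 hvp) as [P [HP [d Hd]]].
  destruct (bound_M kk c) as [M [HM HcM]].
  set (B := Rmax (IZR ((p * (p * M)) ^ Z.of_nat t)) (Rmax (1 / (zeta - x0)) (1 / (y0 - zeta)))).
  destruct (pow_large vR B HvR) as [K HK].
  destruct (period_iter v (p ^ Z.of_nat t) d P Hd K) as [e He].
  set (s := (j + P * K)%nat).
  set (W := vR ^ s).
  assert (HW : 0 < W) by (apply pow_lt; lra).
  assert (HWB : B <= W).
  { apply Rle_trans with (vR ^ K); auto. unfold W. apply Rle_pow; [lra|]. unfold s. nia. }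
  set (k := (K0 + m * v ^ Z.of_nat j * e + 1)%Z).
  assert (HPtZ : Pt = IZR (p ^ Z.of_nat t)) by (unfold Pt, pR; apply pow_IZR).
  assert (HVjZ : Vj = IZR (v ^ Z.of_nat j)) by (unfold Vj, vR; apply pow_IZR).
  assert (Hkey : zeta * W = IZR (k - 1) + f).
  { unfold W, s. rewrite pow_add. fold Vj. unfold vR. rewrite (pow_IZR v (P * K)), He.
    unfold f, k. rewrite HVjZ.
    replace (K0 + m * v ^ Z.of_nat j * e + 1 - 1)%Z with (K0 + m * v ^ Z.of_nat j * e)%Z by ring.
    rewrite plus_IZR, !mult_IZR, plus_IZR, mult_IZR, <- HPtZ. rewrite ?mult_IZR. unfold zeta. field. lra. }
  set (S := Z.of_nat s).
  assert (HWS : powerRZ (IZR v) S = W) by (unfold S, W, vR; rewrite pow_powerRZ; reflexivity).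
  assert (Hleft : adic_left v S k = zeta - f / W).
  { unfold adic_left. rewrite HWS. apply (Rmult_eq_reg_r W); [|lra].
    replace ((zeta - f / W) * W) with (zeta * W - f) by (field; lra). rewrite Hkey. field. lra. }
  assert (Hright : adic_right v S k = zeta + (1 - f) / W).
  { unfold adic_right. rewrite HWS. apply (Rmult_eq_reg_r W); [|lra].
    replace ((zeta + (1 - f) / W) * W) with (zeta * W + 1 - f) by (field; lra). rewrite Hkey.
    rewrite minus_IZR. field. lra. }
  assert (Hlen : adic_len v S k = 1 / W).
  { unfold adic_len. rewrite Hleft, Hright. field. lra. }
  assert (HZpt : Zpt v S k = zeta - f / W + a0 / W).
  { unfold Zpt. rewrite Hleft. f_equal. rewrite powerRZ_add by (unfold vR in HvR; lra).
    rewrite HWS. simpl. rewrite minus_IZR. fold vR. unfold a0. field. lra. }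
  assert (HfW : 0 < f / W /\ f / W < 1 / W).
  { split; [apply Rdiv_lt_0_compat; lra|]. apply (Rmult_lt_reg_r W); [lra|].
    replace (f / W * W) with f by (field; lra). replace (1 / W * W) with 1 by (field; lra). lra. }
  assert (H1fW : 0 < (1 - f) / W /\ (1 - f) / W < 1 / W).
  { split; [apply Rdiv_lt_0_compat; lra|]. apply (Rmult_lt_reg_r W); [lra|].
    replace ((1 - f) / W * W) with (1 - f) by (field; lra). replace (1 / W * W) with 1 by (field; lra). lra. }
  assert (HBx : 1 / W <= zeta - x0).
  { apply div_le_iff; auto. assert (1 / (zeta - x0) <= W).
    { apply Rle_trans with B; auto. unfold B. eapply Rle_trans; [|apply Rmax_r]. apply Rmax_l. }
    apply div_le_iff in H; lra. }
  assert (HBy : 1 / W <= y0 - zeta).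
  { apply div_le_iff; auto. assert (1 / (y0 - zeta) <= W).
    { apply Rle_trans with B; auto. unfold B. eapply Rle_trans; [|apply Rmax_r]. apply Rmax_r. }
    apply div_le_iff in H; lra. }
  exists S, k. split.
  { intros x [Hx1 Hx2]. rewrite Hleft in Hx1. rewrite Hright in Hx2.
    apply (Hconv x0 x y0); auto. lra. }
  intros i Hi.
  set (N := (p * c i)%Z).
  assert (HN : (2 <= N)%Z) by (specialize (hc i Hi); unfold N; nia).
  assert (HNM : (N <= p * M)%Z) by (specialize (HcM i Hi); specialize (hc i Hi); unfold N; nia).
  set (NR := IZR N).
  assert (HNR : 2 <= NR) by (apply IZR_le; lia).
  assert (HPt_int : exists z, zeta * NR ^ t = IZR z).
  { exists (m * c i ^ Z.of_nat t)%Z. unfold NR, N. rewrite pow_IZR, mult_IZR, Z.pow_mul_l, mult_IZR, <- HPtZ.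
    unfold zeta. field. lra. }
  assert (H0int : ~ exists z, zeta * NR ^ 0 = IZR z).
  { intros [z Hz]. simpl in Hz. rewrite Rmult_1_r in Hz. rewrite Hz in Hz01. destruct Hz01 as [Ha Hb].
    apply lt_IZR in Ha. apply lt_IZR in Hb. lia. }
  destruct (transition (fun n => exists z, zeta * NR ^ n = IZR z) t H0int HPt_int) as [n [Hnt [Hn0 [z1 Hzz1]]]].
  assert (Hn0' : forall z, zeta * IZR N ^ n <> IZR z) by (intros z Hz; apply Hn0; exists z; exact Hz).
  set (y := zeta * NR ^ n).
  set (k' := up y).
  assert (HNn : 0 < NR ^ n) by (apply pow_lt; lra).
  assert (HyPt : y * Pt = IZR (m * N ^ Z.of_nat n)).
  { unfold y, NR. rewrite mult_IZR, <- pow_IZR. unfold zeta. field. lra. }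
  destruct (archimed y) as [Hy1 Hy2]. fold k' in Hy1, Hy2.
  assert (Hy3 : IZR (k' - 1) < y).
  { rewrite minus_IZR. assert (Hq : IZR k' - 1 <= y) by lra.
    destruct (Rle_lt_or_eq_dec _ _ Hq) as [Hq'|Hq']; auto.
    exfalso. apply Hn0. exists (k' - 1)%Z. fold y. rewrite minus_IZR. lra. }
  assert (Hd1 : 1 / Pt <= y - IZR (k' - 1)).
  { assert (Hq : IZR ((k' - 1) * p ^ Z.of_nat t) < IZR (m * N ^ Z.of_nat n)).
    { rewrite mult_IZR, <- HPtZ, <- HyPt. apply Rmult_lt_compat_r; auto. }
    apply lt_IZR in Hq. assert (Hq2 : ((k'-1) * p ^ Z.of_nat t + 1 <= m * N ^ Z.of_nat n)%Z) by lia.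
    apply IZR_le in Hq2. rewrite plus_IZR, mult_IZR, <- HPtZ, <- HyPt in Hq2.
    apply div_le_iff; auto.
    replace ((y - IZR (k' - 1)) * Pt) with (y * Pt - IZR (k' - 1) * Pt) by ring. lra. }
  assert (Hd2 : 1 / Pt <= IZR k' - y).
  { assert (Hq : IZR (m * N ^ Z.of_nat n) < IZR (k' * p ^ Z.of_nat t)).
    { rewrite <- HyPt, (mult_IZR k'), <- HPtZ. apply Rmult_lt_compat_r; auto. }
    apply lt_IZR in Hq. assert (Hq2 : (m * N ^ Z.of_nat n + 1 <= k' * p ^ Z.of_nat t)%Z) by lia.
    apply IZR_le in Hq2. rewrite plus_IZR, <- HyPt, (mult_IZR k'), <- HPtZ in Hq2.
    apply div_le_iff; auto.
    replace ((IZR k' - y) * Pt) with (IZR k' * Pt - y * Pt) by ring. lra. }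
  assert (HWN : Pt * NR ^ n <= W).
  { apply Rle_trans with B; auto. apply Rle_trans with (IZR ((p * (p * M)) ^ Z.of_nat t)); [|apply Rmax_l].
    rewrite <- pow_IZR, mult_IZR, Rpow_mult_distr. fold pR. fold Pt.
    apply Rmult_le_compat_l; [lra|]. apply Rle_trans with (NR ^ t).
    - apply Rle_pow; [lra|lia].
    - apply pow_incr. split; [lra|]. apply IZR_le. auto. }
  assert (HnW : NR ^ n / W <= 1 / Pt).
  { apply div_le_iff; auto. replace (1 / Pt * W) with (W / Pt) by (field; lra).
    apply le_div_iff; auto. lra. }
  assert (Hl : in_adic v S k (adic_left v S k)) by (unfold in_adic; rewrite Hleft, Hright; lra).
  assert (Hzin : in_adic v S k zeta) by (unfold in_adic; rewrite Hleft, Hright; lra).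
  assert (Hlz : adic_left v S k < zeta) by (rewrite Hleft; lra).
  assert (HI : forall x, in_adic v S k x -> in_adic N (Z.of_nat n) (up (zeta * IZR N ^ n)) x).
  { intros x [Hx1 Hx2]. rewrite Hleft in Hx1. rewrite Hright in Hx2.
    unfold in_adic, adic_left, adic_right. rewrite <- pow_powerRZ. fold NR y k'. split.
    - apply div_le_iff; auto.
      assert (Hq : (zeta - 1 / W) * NR ^ n <= x * NR ^ n) by (apply Rmult_le_compat_r; lra).
      replace ((zeta - 1 / W) * NR ^ n) with (y - NR ^ n / W) in Hq by (unfold y; field; lra). lra.
    - apply lt_div_iff; auto.
      assert (Hq : x * NR ^ n < (zeta + 1 / W) * NR ^ n) by (apply Rmult_lt_compat_r; lra).
      replace ((zeta + 1 / W) * NR ^ n) with (y + NR ^ n / W) in Hq by (unfold y; field; lra). lra. }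
  destruct (key_i N HN n zeta z1 Hzz1 Hn0' v S k (adic_left v S k) Hl Hlz Hzin HI) as [Hs Hc].
  exists (Z.of_nat n), k'. split; [exact Hs|]. exists zeta. split; [exact Hc|].
  rewrite HZpt, Hlen.
  assert (Hq : zeta - (zeta - f / W + a0 / W) = (f - a0) / W) by (field; lra). rewrite Hq.
  split; [apply Rdiv_lt_0_compat; lra|].
  replace (eps * (1 / W)) with (eps / W) by (field; lra). apply div_le_iff; auto.
  replace (eps / W * W) with eps by (field; lra). lra.
Qed.
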